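(* Let $H=\langle a,b,c\mid ac=ca,\ bc=cb,\ [a,b]=c\rangle$ be the integral Heisenberg group, identified with the group of matrices $\begin{bmatrix}1&x&z\\ &1&y\\ &&1\end{bmatrix}$ with $x,y,z\in\mathbb{Z}$. Let $L:H\rightarrow\mathbb{R}$ be a semi-norm, i.e. $L(gh)\le L(g)+L(h)$ and $L(g)=L(g^{-1})$ for any $g,h\in H$, and let $\mathrm{sL}(g)=\lim_{n\to\infty}\frac{L(g^n)}{n}$ be its stable norm. There exists a constant $K$ such that \[ \mathrm{sL}(g)\le K(|x|+|y|) \] for any $g=\begin{bmatrix}1&x&z\\ &1&y\\ &&1\end{bmatrix}\in H$.
   Context: One may take $K=\max\{L(s):s\in S\}$ with $S=\{a,b,a^{-1},b^{-1}\}$; the proof uses that the stable word length with respect to $S$ of such $g$ equals $|x|+|y|$. *)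

(* Defs.v *)
From Stdlib Require Import Reals ZArith Lra.
From Coquelicot Require Import Coquelicot.
Open Scope R_scope.

(* The integral Heisenberg group, as upper unitriangular integer matrices
   [[1,x,z],[0,1,y],[0,0,1]] encoded by the triple (x,y,z). *)
Record heis := Heis { hx : Z; hy : Z; hz : Z }.

(* matrix product:  (x,y,z)(x',y',z') = (x+x', y+y', z+z'+x*y') *)
Definition hmul (g h : heis) : heis :=
  Heis (hx g + hx h)%Z (hy g + hy h)%Z (hz g + hz h + hx g * hy h)%Z.

Definition hone : heis := Heis 0 0 0.

Definition hinv (g : heis) : heis :=
  Heis (- hx g)%Z (- hy g)%Z (hx g * hy g - hz g)%Z.

Fixpoint hpow (g : heis) (n : nat) : heis :=
  match n with
  | O => hone
  | S m => hmul g (hpow g m)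
  end.

Definition seminorm (L : heis -> R) : Prop :=
  (forall g h, L (hmul g h) <= L g + L h) /\ (forall g, L g = L (hinv g)).

Definition stable_norm (L : heis -> R) (g : heis) : R :=
  real (Lim_seq (fun n => L (hpow g n) / INR n)).

(* Main.v *)
Require Import Defs.
From Stdlib Require Import Reals ZArith.
From Coquelicot Require Import Coquelicot.
From Stdlib Require Import Lra Lia.
Open Scope R_scope.

Lemma heis_eq g h : hx g = hx h -> hy g = hy h -> hz g = hz h -> g = h.
Proof. destruct g, h; simpl; intros; subst; reflexivity. Qed.

Lemma hpow_spec g n :
  hx (hpow g n) = (Z.of_nat n * hx g)%Z /\ hy (hpow g n) = (Z.of_nat n * hy g)%Z /\
  (2 * hz (hpow g n) = 2 * Z.of_nat n * hz g + hx g * hy g * (Z.of_nat n * (Z.of_nat n - 1)))%Z.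
Proof.
  induction n as [|n IH]; [simpl; lia|].
  cbn [hpow hmul hx hy hz]. destruct IH as [H1 [H2 H3]]. rewrite H1, H2. rewrite Nat2Z.inj_succ. nia.
Qed.

Section S.
Variable L : heis -> R.
Hypothesis hL : seminorm L.

Lemma L_nonneg g : 0 <= L g.
Proof.
  destruct hL as [H1 H2].
  assert (E : hmul g (hinv g) = hone) by (apply heis_eq; simpl; ring).
  assert (A := H1 g (hinv g)). rewrite E, <- H2 in A.
  assert (B := H1 hone hone).
  assert (E2 : hmul hone hone = hone) by (apply heis_eq; simpl; ring).
  rewrite E2 in B. lra.
Qed.

Lemma L_pow g n : L (hpow g n) <= L hone + INR n * L g.
Proof.
  induction n as [|n IH]; simpl hpow.
  - simpl. lra.
  - destruct hL as [H1 _]. rewrite S_INR. specialize (H1 g (hpow g n)). lra.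
Qed.

Lemma L_line g (f : Z -> heis) :
  (forall n : nat, hpow g n = f (Z.of_nat n)) ->
  (forall n : nat, hpow (hinv g) n = f (- Z.of_nat n)%Z) ->
  forall k, L (f k) <= L hone + IZR (Z.abs k) * L g.
Proof.
  intros Hp Hn k. destruct (Z_le_gt_dec 0 k).
  - replace k with (Z.of_nat (Z.to_nat k)) by lia.
    rewrite <- Hp.
    replace (IZR (Z.abs (Z.of_nat (Z.to_nat k)))) with (INR (Z.to_nat k)).
    + apply L_pow.
    + rewrite INR_IZR_INZ; f_equal; lia.
  - replace k with (- Z.of_nat (Z.to_nat (- k)))%Z by lia.
    rewrite <- Hn. destruct hL as [_ H2]. rewrite (H2 g).
    replace (IZR (Z.abs (- Z.of_nat (Z.to_nat (-k))))) with (INR (Z.to_nat (-k))).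
    + apply L_pow.
    + rewrite INR_IZR_INZ; f_equal; lia.
Qed.

Definition A := L (Heis 1 0 0).
Definition B := L (Heis 0 1 0).
Definition C := L (Heis 0 0 1).

Lemma La k : L (Heis k 0 0) <= L hone + IZR (Z.abs k) * A.
Proof.
  apply (L_line (Heis 1 0 0) (fun k => Heis k 0 0)); intro n.
  - destruct (hpow_spec (Heis 1 0 0) n) as [H1 [H2 H3]]; apply heis_eq; cbn [hx hy hz hinv] in *; nia.
  - destruct (hpow_spec (hinv (Heis 1 0 0)) n) as [H1 [H2 H3]]; apply heis_eq; cbn [hx hy hz hinv] in *; nia.
Qed.

Lemma Lb k : L (Heis 0 k 0) <= L hone + IZR (Z.abs k) * B.
Proof.
  apply (L_line (Heis 0 1 0) (fun k => Heis 0 k 0)); intro n.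
  - destruct (hpow_spec (Heis 0 1 0) n) as [H1 [H2 H3]]; apply heis_eq; cbn [hx hy hz hinv] in *; nia.
  - destruct (hpow_spec (hinv (Heis 0 1 0)) n) as [H1 [H2 H3]]; apply heis_eq; cbn [hx hy hz hinv] in *; nia.
Qed.

Lemma Lc k : L (Heis 0 0 k) <= L hone + IZR (Z.abs k) * C.
Proof.
  apply (L_line (Heis 0 0 1) (fun k => Heis 0 0 k)); intro n.
  - destruct (hpow_spec (Heis 0 0 1) n) as [H1 [H2 H3]]; apply heis_eq; cbn [hx hy hz hinv] in *; nia.
  - destruct (hpow_spec (hinv (Heis 0 0 1)) n) as [H1 [H2 H3]]; apply heis_eq; cbn [hx hy hz hinv] in *; nia.
Qed.

Lemma L_pow1 g n : L (hpow g (S n)) <= INR (S n) * L g.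
Proof.
  induction n as [|n IH].
  - replace (hpow g 1) with g by (apply heis_eq; simpl; ring). simpl; lra.
  - change (hpow g (S (S n))) with (hmul g (hpow g (S n))).
    destruct hL as [H1 _]. rewrite (S_INR (S n)). specialize (H1 g (hpow g (S n))). lra.
Qed.

Lemma L_line1 g (f : Z -> heis) :
  (forall n : nat, hpow g n = f (Z.of_nat n)) ->
  (forall n : nat, hpow (hinv g) n = f (- Z.of_nat n)%Z) ->
  forall k, k <> 0%Z -> L (f k) <= IZR (Z.abs k) * L g.
Proof.
  intros Hp Hn k hk. destruct (Z_le_gt_dec 0 k).
  - replace k with (Z.of_nat (S (Z.to_nat k - 1))) by lia.
    rewrite <- Hp.
    replace (IZR (Z.abs (Z.of_nat (S (Z.to_nat k - 1))))) with (INR (S (Z.to_nat k - 1))).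
    + apply L_pow1.
    + rewrite INR_IZR_INZ; f_equal; lia.
  - replace k with (- Z.of_nat (S (Z.to_nat (- k) - 1)))%Z by lia.
    rewrite <- Hn. destruct hL as [_ H2]. rewrite (H2 g).
    replace (IZR (Z.abs (- Z.of_nat (S (Z.to_nat (-k) - 1))))) with (INR (S (Z.to_nat (-k) - 1))).
    + apply L_pow1.
    + rewrite INR_IZR_INZ; f_equal; lia.
Qed.

Lemma La1 k : k <> 0%Z -> L (Heis k 0 0) <= IZR (Z.abs k) * A.
Proof.
  apply (L_line1 (Heis 1 0 0) (fun k => Heis k 0 0)); intro n.
  - destruct (hpow_spec (Heis 1 0 0) n) as [H1 [H2 H3]]; apply heis_eq; cbn [hx hy hz hinv] in *; nia.
  - destruct (hpow_spec (hinv (Heis 1 0 0)) n) as [H1 [H2 H3]]; apply heis_eq; cbn [hx hy hz hinv] in *; nia.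
Qed.

Lemma Lb1 k : k <> 0%Z -> L (Heis 0 k 0) <= IZR (Z.abs k) * B.
Proof.
  apply (L_line1 (Heis 0 1 0) (fun k => Heis 0 k 0)); intro n.
  - destruct (hpow_spec (Heis 0 1 0) n) as [H1 [H2 H3]]; apply heis_eq; cbn [hx hy hz hinv] in *; nia.
  - destruct (hpow_spec (hinv (Heis 0 1 0)) n) as [H1 [H2 H3]]; apply heis_eq; cbn [hx hy hz hinv] in *; nia.
Qed.

Lemma Lh x y : (x <> 0 \/ y <> 0)%Z -> L (Heis x y 0) <= IZR (Z.abs x) * A + IZR (Z.abs y) * B.
Proof.
  intro H. assert (A0 : 0 <= A) by apply L_nonneg. assert (B0 : 0 <= B) by apply L_nonneg.
  destruct (Z.eq_dec x 0) as [->|hx0]; destruct (Z.eq_dec y 0) as [->|hy0].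
  - lia.
  - pose proof (Lb1 y hy0). simpl (Z.abs 0). lra.
  - pose proof (La1 x hx0). simpl (Z.abs 0). lra.
  - assert (E2 : Heis x y 0 = hmul (Heis 0 y 0) (Heis x 0 0)) by (apply heis_eq; simpl; ring).
    rewrite E2. destruct hL as [H1 _]. pose proof (H1 (Heis 0 y 0) (Heis x 0 0)).
    pose proof (La1 x hx0). pose proof (Lb1 y hy0). lra.
Qed.

Definition D := 2 * A + 2 * B + 2 * C.

Lemma Lcentral_pos w : (0 <= w)%Z -> L (Heis 0 0 w) <= 5 * L hone + D * IZR (Z.sqrt w).
Proof.
  intro hw. destruct (Z.sqrt_spec w hw) as [S1 S2].
  assert (m0 := Z.sqrt_nonneg w).
  set (m := Z.sqrt w) in *. set (r := (w - m * m)%Z).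
  assert (E : Heis 0 0 w = hmul (hmul (hmul (hmul (Heis m 0 0) (Heis 0 m 0))
            (Heis (-m) 0 0)) (Heis 0 (-m) 0)) (Heis 0 0 r)).
  { apply heis_eq; simpl; unfold r; ring. }
  rewrite E. destruct hL as [H1 _].
  pose proof (La m). pose proof (La (-m)). pose proof (Lb m). pose proof (Lb (-m)).
  pose proof (Lc r).
  rewrite Z.abs_opp in *. rewrite Z.abs_eq in * by lia.
  assert (IZR r <= 2 * IZR m).
  { rewrite <- mult_IZR. apply IZR_le. unfold r, Z.succ in *. nia. }
  assert (0 <= IZR r) by (apply IZR_le; unfold r; lia).
  assert (0 <= C) by apply L_nonneg.
  pose proof (H1 (hmul (hmul (hmul (Heis m 0 0) (Heis 0 m 0)) (Heis (- m) 0 0)) (Heis 0 (- m) 0)) (Heis 0 0 r)).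
  pose proof (H1 (hmul (hmul (Heis m 0 0) (Heis 0 m 0)) (Heis (- m) 0 0)) (Heis 0 (- m) 0)).
  pose proof (H1 (hmul (Heis m 0 0) (Heis 0 m 0)) (Heis (- m) 0 0)).
  pose proof (H1 (Heis m 0 0) (Heis 0 m 0)).
  unfold D. nra.
Qed.

Lemma Lcentral w : L (Heis 0 0 w) <= 5 * L hone + D * IZR (Z.sqrt (Z.abs w)).
Proof.
  destruct (Z_le_gt_dec 0 w).
  - rewrite Z.abs_eq by lia. apply Lcentral_pos; lia.
  - destruct hL as [_ H2]. rewrite H2.
    replace (hinv (Heis 0 0 w)) with (Heis 0 0 (Z.abs w)).
    + apply Lcentral_pos; lia.
    + apply heis_eq; simpl; lia.
Qed.

End S.

Lemma arch r : exists N : nat, r < INR N.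
Proof.
  destruct (archimed r) as [H _]. exists (Z.to_nat (up r)).
  rewrite INR_IZR_INZ. assert (up r <= Z.of_nat (Z.to_nat (up r)))%Z by lia.
  apply IZR_le in H0. lra.
Qed.

Theorem corollary24 (L : heis -> R) (hL : seminorm L) :
  exists K : R, forall x y z : Z,
    stable_norm L (Heis x y z) <= K * (IZR (Z.abs x) + IZR (Z.abs y)).
Proof.
  exists (A L + B L). intros x y z.
  assert (A0 : 0 <= A L) by (apply L_nonneg; auto).
  assert (B0 : 0 <= B L) by (apply L_nonneg; auto).
  assert (C0 : 0 <= C L) by (apply L_nonneg; auto).
  assert (D0 : 0 <= D L) by (unfold D; lra).
  assert (O0 : 0 <= L hone) by (apply L_nonneg; auto).
  assert (X0 : 0 <= IZR (Z.abs x)) by (apply IZR_le; lia).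
  assert (Y0 : 0 <= IZR (Z.abs y)) by (apply IZR_le; lia).
  set (Bd := (A L + B L) * (IZR (Z.abs x) + IZR (Z.abs y))).
  assert (Bd0 : 0 <= Bd) by (unfold Bd; nra).
  assert (Hn : forall n : nat, L (hpow (Heis x y z) n) <=
            7 * L hone + INR n * Bd + D L * IZR (Z.sqrt (Z.abs (Z.of_nat n * z)))).
  { intro n.
    assert (E : hpow (Heis x y z) n = hmul (hpow (Heis x y 0) n) (Heis 0 0 (Z.of_nat n * z))).
    { destruct (hpow_spec (Heis x y z) n) as [H1 [H2 H3]].
      destruct (hpow_spec (Heis x y 0) n) as [G1 [G2 G3]].
      apply heis_eq; cbn [hx hy hz hinv hmul] in *; nia. }
    rewrite E. pose proof hL as [H1 H2].
    pose proof (H1 (hpow (Heis x y 0) n) (Heis 0 0 (Z.of_nat n * z))).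
    pose proof (Lcentral L hL (Z.of_nat n * z)).
    assert (0 <= INR n) by apply pos_INR.
    assert (0 <= D L * IZR (Z.sqrt (Z.abs (Z.of_nat n * z)))).
    { apply Rmult_le_pos; auto. apply IZR_le, Z.sqrt_nonneg. }
    destruct (Z.eq_dec x 0) as [->|hx0]; [destruct (Z.eq_dec y 0) as [->|hy0]|].
    + assert (E3 : hpow (Heis 0 0 0) n = hone).
      { destruct (hpow_spec (Heis 0 0 0) n) as [G1 [G2 G3]].
        apply heis_eq; cbn [hx hy hz hone] in *; nia. }
      rewrite E3 in H |- *. assert (0 <= INR n * Bd) by nra. lra.
    + pose proof (L_pow L hL (Heis 0 y 0) n).
      pose proof (Lh L hL 0 y (or_intror hy0)).
      assert (LB : L (Heis 0 y 0) <= Bd).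
      { unfold Bd. assert (0 <= A L * IZR (Z.abs y)) by (apply Rmult_le_pos; lra).
        assert (0 <= B L * IZR (Z.abs 0)) by (apply Rmult_le_pos; lra). nra. }
      assert (INR n * L (Heis 0 y 0) <= INR n * Bd) by (apply Rmult_le_compat_l; lra).
      lra.
    + pose proof (L_pow L hL (Heis x y 0) n).
      pose proof (Lh L hL x y (or_introl hx0)).
      assert (LB : L (Heis x y 0) <= Bd).
      { unfold Bd. assert (0 <= A L * IZR (Z.abs y)) by (apply Rmult_le_pos; lra).
        assert (0 <= B L * IZR (Z.abs x)) by (apply Rmult_le_pos; lra). nra. }
      assert (INR n * L (Heis x y 0) <= INR n * Bd) by (apply Rmult_le_compat_l; lra).
      lra. }
  assert (Hle : forall eps, 0 < eps -> Rbar_le (Lim_seq (fun n => L (hpow (Heis x y z) n) / INR n)) (Bd + eps)).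
  { intros eps He. rewrite <- (Lim_seq_const (Bd + eps)). apply Lim_seq_le_loc.
    destruct (arch ((D L)^2 * (IZR (Z.abs z) + 1) / (eps/2)^2 + 14 * L hone / eps)) as [N HN].
    exists (S N). intros n Hn'.
    assert (Npos : 0 < INR n) by (apply lt_0_INR; lia).
    assert (NN : INR N <= INR n) by (apply le_INR; lia).
    set (m := Z.sqrt (Z.abs (Z.of_nat n * z))).
    assert (m0 : (0 <= m)%Z) by apply Z.sqrt_nonneg.
    assert (Hm : (m * m <= Z.of_nat n * Z.abs z)%Z).
    { replace (Z.of_nat n * Z.abs z)%Z with (Z.abs (Z.of_nat n * z)) by (rewrite Z.abs_mul; lia).
      unfold m. apply Z.sqrt_spec; lia. }
    apply IZR_le in Hm. rewrite mult_IZR, mult_IZR, <- INR_IZR_INZ in Hm.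
    assert (M0 : 0 <= IZR m) by (apply IZR_le; lia).
    assert (Z0 : 0 <= IZR (Z.abs z)) by (apply IZR_le; lia).
    assert (r10 : 0 <= (D L)^2 * (IZR (Z.abs z) + 1) / (eps/2)^2).
    { apply Rmult_le_pos; [nra|]. apply Rlt_le, Rinv_0_lt_compat. nra. }
    assert (r20 : 0 <= 14 * L hone / eps).
    { apply Rmult_le_pos; [nra|]. apply Rlt_le, Rinv_0_lt_compat. nra. }
    assert (HN1 : (D L)^2 * (IZR (Z.abs z) + 1) / (eps/2)^2 <= INR N) by lra.
    assert (HN3 : 14 * L hone / eps <= INR N) by lra.
    assert (HN2 : (D L)^2 * (IZR (Z.abs z) + 1) <= (eps/2)^2 * INR N).
    { apply Rmult_le_compat_l with (r := (eps/2)^2) in HN1; [|nra].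
      field_simplify in HN1; [|lra]. field_simplify; nra. }
    assert (HN4 : 14 * L hone <= eps * INR N).
    { apply Rmult_le_compat_l with (r := eps) in HN3; [|nra].
      replace (eps * (14 * L hone / eps)) with (14 * L hone) in HN3 by (field; lra). lra. }
    assert (Sq : (D L * IZR m)^2 <= (eps/2 * INR n)^2).
    { assert (S1 : (D L * IZR m)^2 <= (D L)^2 * (INR n * IZR (Z.abs z))).
      { replace ((D L * IZR m)^2) with ((D L)^2 * (IZR m * IZR m)) by ring.
        apply Rmult_le_compat_l; [nra|lra]. }
      assert (S2 : (D L)^2 * (INR n * IZR (Z.abs z)) <= (D L)^2 * (IZR (Z.abs z) + 1) * INR n).
      { assert (0 <= (D L)^2) by nra. nra. }
      assert (S3 : (D L)^2 * (IZR (Z.abs z) + 1) * INR n <= (eps/2)^2 * INR N * INR n).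
      { apply Rmult_le_compat_r; lra. }
      assert (S4 : (eps/2)^2 * INR N * INR n <= (eps/2 * INR n)^2).
      { replace ((eps/2 * INR n)^2) with ((eps/2)^2 * INR n * INR n) by ring.
        apply Rmult_le_compat_r; [lra|]. apply Rmult_le_compat_l; [nra|lra]. }
      lra. }
    assert (Dm : D L * IZR m <= eps/2 * INR n).
    { apply Rsqr_incr_0_var; [rewrite <- !Rsqr_pow2 in Sq; exact Sq|apply Rmult_le_pos; lra]. }
    specialize (Hn n). fold m in Hn.
    apply Rmult_le_reg_r with (INR n); auto.
    unfold Rdiv. rewrite Rmult_assoc, Rinv_l by lra. nra. }
  unfold stable_norm.
  destruct (Lim_seq (fun n => L (hpow (Heis x y z) n) / INR n)) eqn:EL.
  - simpl. apply Rle_plus_epsilon. intros eps He. specialize (Hle eps He).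
    exact Hle.
  - specialize (Hle 1 Rlt_0_1). contradiction.
  - simpl. exact Bd0.
Qed.
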